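(* Let $\mathcal{AF}_{\vdash}=(\vdash,\overline{\cdot},\widehat{\cdot})$ be a setting that satisfies Pre-Relevance. Then for each $\mathsf{Sem}\in\{\mathsf{Grd},\mathsf{Prf}\}$ the consequence relation $\mathrel{\mid\!\sim}^{\mathcal{AF}_{\vdash}}_{\mathsf{Sem}}$ satisfies Non-Interference: for all $\mathcal{S}_1\cup\{\phi\}\cup\mathcal{S}_2\subseteq\mathcal{L}$ with $(\mathcal{S}_1\cup\{\phi\})\mid\mathcal{S}_2$, we have $\mathcal{S}_1\mathrel{\mid\!\sim}_{\mathsf{Sem}}\phi$ iff $\mathcal{S}_1\cup\mathcal{S}_2\mathrel{\mid\!\sim}_{\mathsf{Sem}}\phi$.
   Context: $\mathcal{L}$ is the set of formulas of a language built from propositional atoms; for $\mathcal{S}\subseteq\mathcal{L}$, $\mathsf{Atoms}(\mathcal{S})$ is the set of atoms occurring in formulas of $\mathcal{S}$, and $\mathcal{S}_1\mid\mathcal{S}_2$ means $\mathsf{Atoms}(\mathcal{S}_1)\cap\mathsf{Atoms}(\mathcal{S}_2)=\emptyset$. $\wp_{\sf fin}(X)$ is the set of finite subsets of $X$. A setting is a triple $(\vdash,\overline{\cdot},\widehat{\cdot})$ where ${\vdash}\subseteq\wp_{\sf fin}(\mathcal{L})\times\mathcal{L}$ is an arbitrary relation (no reflexivity, monotonicity or transitivity assumed), $\overline{\cdot}:\mathcal{L}\to\wp(\mathcal{L})$ is a contrariness function, and $\widehat{\cdot}$ assigns to each nonempty finite set of formulas a finite set of formulas (with the convention $\widehat{\emptyset}=\emptyset$).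 For $\mathcal{S}\subseteq\mathcal{L}$, $\mathit{Arg}_{\vdash}(\mathcal{S})$ is the set of pairs $(\Gamma,\gamma)$ with $\Gamma\subseteq\mathcal{S}$ finite and $\Gamma\vdash\gamma$; $\mathsf{Supp}((\Gamma,\gamma))=\Gamma$, $\mathsf{Conc}((\Gamma,\gamma))=\gamma$. $\mathcal{AF}_{\vdash}(\mathcal{S})$ is the directed graph on $\mathit{Arg}_{\vdash}(\mathcal{S})$ in which $(\Gamma,\gamma)$ attacks $(\Gamma',\gamma')$ iff $\gamma\in\overline{\phi}$ for some $\phi\in\widehat{\Gamma'}$. For $\mathcal{A}\subseteq\mathit{Arg}_{\vdash}(\mathcal{S})$: conflict-free = no member attacks a member; $\mathcal{A}$ defends $a$ iff every attacker of $a$ in $\mathit{Arg}_{\vdash}(\mathcal{S})$ is attacked by some member of $\mathcal{A}$; admissible = conflict-free and defends all its members; complete = admissible and contains every argument it defends; preferred = $\subseteq$-maximal complete; grounded = the $\subseteq$-minimal complete set; stable = admissible and attacks every argument not in it. $\mathsf{Grd},\mathsf{Prf}$ denote these semantics. Consequence: $\mathcal{S}\mathrel{\mid\!\sim}^{\mathcal{AF}_{\vdash}}_{\mathsf{Sem}}\phi$ iff every $\mathsf{Sem}$-extension of $\mathcal{AF}_{\vdash}(\mathcal{S})$ contains an argument with conclusion $\phi$. Pre-Relevance: (a) $\vdash$ is Pre-Relevant iff for all $\mathcal{S}_1,\mathcal{S}_2,\phi$ with $\mathcal{S}_1\cup\{\phi\}\mid\mathcal{S}_2$, if $\mathcal{S}_1\cup\mathcal{S}_2\vdash\phi$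 then $\mathcal{S}_1'\vdash\phi$ for some $\mathcal{S}_1'\subseteq\mathcal{S}_1$. (b) The setting is prime iff for all sets of atoms $\mathcal{A}_1\mid\mathcal{A}_2$, all finite $\mathcal{S}_1,\mathcal{T}_1,\mathcal{S}_2,\mathcal{T}_2$ with $\mathsf{Atoms}(\mathcal{S}_i),\mathsf{Atoms}(\mathcal{T}_i)\subseteq\mathcal{A}_i$, and all $\phi,\psi$ with $\psi\in\overline{\phi}$ and $\phi\in\widehat{\mathcal{T}_1\cup\mathcal{T}_2}$: if $\mathcal{S}_1\cup\mathcal{S}_2\vdash\psi$ then there are $i\in\{1,2\}$, $\mathcal{S}_i'\subseteq\mathcal{S}_i$, $\phi_i\in\widehat{\mathcal{T}_i}$ and $\psi_i\in\overline{\phi_i}$ with $\mathcal{S}_i'\vdash\psi_i$. (c) A setting satisfies Pre-Relevance iff $\vdash$ is Pre-Relevant, the setting is prime, and $\widehat{\Delta}\subseteq\widehat{\Delta\cup\Delta'}$ for all finite $\Delta,\Delta'$. *)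

(* Defs.v *)
From HB Require Import structures.
From mathcomp Require Import all_boot.
From mathcomp Require Import finmap.

Set Implicit Arguments.
Unset Strict Implicit.
Unset Printing Implicit Defensive.

Local Open Scope fset_scope.

Section Setting.

(* L : the formulas; Atom : propositional atoms; atoms x a : atom a occurs in x *)
Variables (L : choiceType) (Atom : Type) (atoms : L -> Atom -> Prop).
Variable derives : {fset L} -> L -> Prop.
Variable contr : L -> L -> Prop.
Variable hat : {fset L} -> {fset L}.

Definition AtomsOf (S : L -> Prop) : Atom -> Prop :=
  fun a => exists x, S x /\ atoms x a.

Definition fs (G : {fset L}) : L -> Prop := fun x => x \in G.

Definition indep (S1 S2 : L -> Prop) : Prop :=
  forall a, AtomsOf S1 a -> AtomsOf S2 a -> False.

Definition unionP (S1 S2 : L -> Prop) : L -> Prop := fun x => S1 x \/ S2 x.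
Definition singleP (phi : L) : L -> Prop := fun x => x = phi.

Definition pre_relevant_derives : Prop :=
  forall (S1 S2 : {fset L}) (phi : L),
    indep (unionP (fs S1) (singleP phi)) (fs S2) ->
    derives (S1 `|` S2) phi ->
    exists S1' : {fset L}, S1' `<=` S1 /\ derives S1' phi.

Definition prime_setting : Prop :=
  forall (A1 A2 : Atom -> Prop),
    (forall a, A1 a -> A2 a -> False) ->
    forall (S1 T1 S2 T2 : {fset L}),
      (forall a, AtomsOf (fs S1) a -> A1 a) ->
      (forall a, AtomsOf (fs T1) a -> A1 a) ->
      (forall a, AtomsOf (fs S2) a -> A2 a) ->
      (forall a, AtomsOf (fs T2) a -> A2 a) ->
      forall phi psi : L,
        contr phi psi -> phi \in hat (T1 `|` T2) ->
        derives (S1 `|` S2) psi ->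
        (exists (S1' : {fset L}) (phi1 psi1 : L),
            S1' `<=` S1 /\ phi1 \in hat T1 /\ contr phi1 psi1 /\ derives S1' psi1)
        \/
        (exists (S2' : {fset L}) (phi2 psi2 : L),
            S2' `<=` S2 /\ phi2 \in hat T2 /\ contr phi2 psi2 /\ derives S2' psi2).

Definition setting_pre_relevance : Prop :=
  [/\ pre_relevant_derives, prime_setting &
      forall D D' : {fset L}, hat D `<=` hat (D `|` D')].

Definition arg := ({fset L} * L)%type.
Definition Supp (a : arg) : {fset L} := a.1.
Definition Conc (a : arg) : L := a.2.

Definition isArg (S : L -> Prop) (a : arg) : Prop :=
  (forall x, x \in Supp a -> S x) /\ derives (Supp a) (Conc a).

Definition attacks (a b : arg) : Prop :=
  exists phi, phi \in hat (Supp b) /\ contr phi (Conc a).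

Definition conflict_free (E : arg -> Prop) : Prop :=
  forall a b, E a -> E b -> ~ attacks a b.

Definition defends (S : L -> Prop) (E : arg -> Prop) (a : arg) : Prop :=
  forall b, isArg S b -> attacks b a -> exists c, E c /\ attacks c b.

Definition admissible (S : L -> Prop) (E : arg -> Prop) : Prop :=
  (forall a, E a -> isArg S a) /\ conflict_free E /\
  (forall a, E a -> defends S E a).

Definition complete (S : L -> Prop) (E : arg -> Prop) : Prop :=
  admissible S E /\ (forall a, isArg S a -> defends S E a -> E a).

Definition subE (E E' : arg -> Prop) : Prop := forall a, E a -> E' a.

(* the ⊆-least (= the ⊆-minimal) complete extension *)
Definition grounded (S : L -> Prop) (E : arg -> Prop) : Prop :=
  complete S E /\ (forall E', complete S E' -> subE E E').

Definition preferred (S : L -> Prop) (E : arg -> Prop) : Prop :=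
  complete S E /\ (forall E', complete S E' -> subE E E' -> subE E' E).

End Setting.

Inductive sem := Grd | Prf.

Definition extension (s : sem) (L : choiceType)
  (derives : {fset L} -> L -> Prop) (contr : L -> L -> Prop)
  (hat : {fset L} -> {fset L}) (S : L -> Prop) (E : arg L -> Prop) : Prop :=
  match s with
  | Grd => grounded derives contr hat S E
  | Prf => preferred derives contr hat S E
  end.

Definition nmsim (s : sem) (L : choiceType)
  (derives : {fset L} -> L -> Prop) (contr : L -> L -> Prop)
  (hat : {fset L} -> {fset L}) (S : L -> Prop) (phi : L) : Prop :=
  forall E, extension s derives contr hat S E ->
    exists a, E a /\ Conc a = phi.

(* Main.v *)
Require Import Defs.
From mathcomp Require Import all_boot finmap.
From mathcomp Require Import boolp classical_sets.
Local Open Scope fset_scope.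
Set Implicit Arguments.
Unset Strict Implicit.

Section AF.
Variables (L : choiceType) (derives : {fset L} -> L -> Prop)
  (contr : L -> L -> Prop) (hat : {fset L} -> {fset L}).

Local Notation att := (attacks contr hat).
Local Notation isA := (isArg derives).
Local Notation dfd := (defends derives contr hat).
Local Notation adm := (admissible derives contr hat).
Local Notation cmp := (complete derives contr hat).

Lemma defends_mono S (E E' : arg L -> Prop) a :
  subE E E' -> dfd S E a -> dfd S E' a.
Proof.
move=> sEE' Hd b Hb Hba; have [c [Ec Hcb]] := Hd b Hb Hba.
by exists c; split=> //; apply: sEE'.
Qed.

Lemma adm_ext S (E E' : arg L -> Prop) :
  (forall a, E a <-> E' a) -> adm S E -> adm S E'.
Proof.
move=> HE [Hs [Hcf Hd]]; split; last split.
- by move=> a /HE; apply: Hs.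
- by move=> a b /HE Ha /HE Hb; apply: Hcf.
- move=> a /HE Ha; apply: (defends_mono _ (Hd a Ha)) => x; apply HE.
Qed.

Lemma fundamental S (D : arg L -> Prop) a :
  adm S D -> isA S a -> dfd S D a -> adm S (fun x => D x \/ x = a).
Proof.
move=> [Hs [Hcf Hd]] Ha Hda; split; last split.
- by move=> x [/Hs|->].
- move=> x y [Dx|->] [Dy|->] Hxy.
  + exact: (Hcf x y).
  + have [c [Dc Hcx]] := Hda x (Hs x Dx) Hxy; exact: (Hcf c x).
  + have [c [Dc Hca]] := Hd y Dy a Ha Hxy.
    have [d [Dd Hdc]] := Hda c (Hs c Dc) Hca; exact: (Hcf d c).
  + have [c [Dc Hca]] := Hda a Ha Hxy.
    have [d [Dd Hdc]] := Hda c (Hs c Dc) Hca; exact: (Hcf d c).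
- move=> x [Dx|->].
  + by apply: (defends_mono _ (Hd x Dx)) => z Dz; left.
  + by apply: (defends_mono _ Hda) => z Dz; left.
Qed.

Definition lfp S : arg L -> Prop := fun a =>
  forall X : arg L -> Prop, (forall b, isA S b -> dfd S X b -> X b) -> X a.

Lemma lfp_grounded S : grounded derives contr hat S (lfp S).
Proof.
have Hcl : forall b, isA S b -> dfd S (lfp S) b -> lfp S b.
  move=> b Hb Hd; rewrite /lfp => X HX; apply: (HX) => //; apply: (defends_mono _ Hd).
  by move=> c Hc; apply: (Hc X HX).
have Hsub : forall a, lfp S a -> isA S a by move=> a Ha; apply: Ha.
have HF : forall a, lfp S a -> dfd S (lfp S) a.
  move=> a Ha; suff : lfp S a /\ dfd S (lfp S) a by case.
  apply: (Ha (fun a => lfp S a /\ dfd S (lfp S) a)) => b Hb Hd; have Hd' : dfd S (lfp S) b.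
    by apply: (defends_mono _ Hd) => c [].
  by split=> //; apply: Hcl.
have Hcf : conflict_free contr hat (lfp S).
  move=> a b Ha Hb Hab.
  pose Z := fun a => lfp S a /\ forall c, lfp S c -> ~ att c a /\ ~ att a c.
  suff : Z a by move=> [_ /(_ b Hb) [_]]; apply.
  apply: (Ha Z) => x Hx Hd.
  have Hl : lfp S x by apply: Hcl => //; apply: (defends_mono _ Hd) => c [].
  split=> // c Hc; split.
  + move=> Hcx; have [z [[_ Hz] Hzc]] := Hd c (Hsub c Hc) Hcx.
    exact: ((Hz c Hc).2 Hzc).
  + move=> Hxc; have [d [Hdl Hdx]] := HF c Hc x Hx Hxc.
    have [z [[_ Hz] Hzd]] := Hd d (Hsub d Hdl) Hdx.
    exact: ((Hz d Hdl).2 Hzd).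
split; first by split; [split; [|split]|].
move=> E' [_ HE'] a Ha; exact: Ha.
Qed.

Lemma exists_pref S (D : arg L -> Prop) :
  adm S D -> exists M, preferred derives contr hat S M /\ subE D M.
Proof.
move=> HD.
pose P := fun X : set (arg L) => adm S (fun a => D a \/ X a).
have HP : forall F : set (set (arg L)), (F `<=` P)%classic ->
    total_on F subset -> P (\bigcup_(X in F) X)%classic.
  move=> F FP Ftot; have [Hs [Hcf Hd]] := HD; split; last split.
  - move=> a [Da|[X FX Xa]]; first exact: Hs.
    by have [H _] := FP X FX; apply: H; right.
  - move=> a b [Da|[X FX Xa]] [Db|[Y FY Yb]].
    + exact: Hcf.
    + by have [_ [H _]] := FP Y FY; apply: H; [left|right].
    + by have [_ [H _]] := FP X FX; apply: H; [right|left].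
    + have [XY|YX] := Ftot X Y FX FY.
      * by have [_ [H _]] := FP Y FY; apply: H; right => //; apply: XY.
      * by have [_ [H _]] := FP X FX; apply: H; right => //; apply: YX.
  - move=> a [Da|[X FX Xa]].
    + by apply: (defends_mono _ (Hd a Da)) => z Dz; left.
    + have [_ [_ H]] := FP X FX; apply: (defends_mono _ (H a (or_intror Xa))).
      by move=> z [Dz|Xz]; [left|right; exists X].
have [A [PA maxA]] := Zorn_bigcup HP.
have key : forall B, P B -> subE A B -> subE B A.
  move=> B PB AB b Bb; apply: contrapT => nAb.
  by apply: (maxA B) => //; split => // /(_ b Bb).
pose M := fun a => D a \/ A a.
have cM : cmp S M.
  split=> // a Ha Hd.
  have H1 := fundamental PA Ha Hd.
  have PB : P (fun x => A x \/ x = a).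
    apply: (adm_ext _ H1) => x; rewrite /M; tauto.
  by right; apply: (key _ PB) => [x|]; [left|right].
exists M; split; last by move=> x; left.
split=> // E' [HE' _] ME' a Ea; right.
apply: (key E') => //; last by move=> x Ax; apply: ME'; right.
rewrite /P; apply: (adm_ext _ HE') => x; split; [by right|].
by move=> [Dx|//]; apply: ME'; left.
Qed.

End AF.

Section Spec.
Variables (L : choiceType) (Atom : Type) (atoms : L -> Atom -> Prop)
  (derives : {fset L} -> L -> Prop) (contr : L -> L -> Prop)
  (hat : {fset L} -> {fset L}).
Hypothesis hat0 : hat fset0 = fset0.
Hypothesis PR : pre_relevant_derives atoms derives.
Hypothesis PRIME : prime_setting atoms derives contr hat.
Hypothesis HM : forall D D' : {fset L}, hat D `<=` hat (D `|` D').
Variables (S1 S2 : L -> Prop) (phi : L).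
Hypothesis Hind : indep atoms (unionP S1 (singleP phi)) S2.

Local Notation S := (unionP S1 S2).
Local Notation att := (attacks contr hat).
Local Notation isA := (isArg derives).
Local Notation dfd := (defends derives contr hat).
Local Notation adm := (admissible derives contr hat).
Local Notation cmp := (complete derives contr hat).

Lemma isArg_mono a : isA S1 a -> isA S a.
Proof. by move=> [H1 H2]; split=> // x /H1; left. Qed.

Lemma att_sub a' a d : Supp a' `<=` Supp a -> att d a' -> att d a.
Proof.
move=> sub [f [Hf Hc]]; exists f; split=> //.
by have := HM (Supp a') (Supp a); rewrite (fsetUidPr _ _ sub) => /fsubsetP; apply.
Qed.

Definition D1 (G : {fset L}) := [fset x in G | `[< S1 x >]].
Definition D2 (G : {fset L}) := [fset x in G | ~~ `[< S1 x >]].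

Lemma D12 G : G = D1 G `|` D2 G.
Proof.
apply/fsetP => x; rewrite /D1 /D2 !inE.
by case: (x \in G); case: `[< S1 x >].
Qed.

Lemma D1P G x : x \in D1 G -> x \in G /\ S1 x.
Proof. by rewrite /D1 !inE => /andP [-> /asboolP]. Qed.

Lemma D2P G x : (forall y, y \in G -> S y) -> x \in D2 G -> S2 x.
Proof.
move=> HG; rewrite /D2 !inE => /andP [/HG [H|//] /asboolP]; by [].
Qed.

Lemma PS c b : isA S c -> (forall x, x \in Supp b -> S1 x) -> att c b ->
  exists c', isA S1 c' /\ Supp c' `<=` Supp c /\ att c' b.
Proof.
move=> [Hs Hd] Hb [f [Hf Hfc]].
have disj : forall a, AtomsOf atoms S1 a -> AtomsOf atoms S2 a -> False.
  move=> a [x [Sx ax]] H2.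
  exact: (Hind (ex_intro _ x (conj (or_introl Sx) ax)) H2).
have h1 : forall a, AtomsOf atoms (fs (D1 (Supp c))) a -> AtomsOf atoms S1 a.
  by move=> a [x [/D1P [_ H] ax]]; exists x.
have h2 : forall a, AtomsOf atoms (fs (Supp b)) a -> AtomsOf atoms S1 a.
  by move=> a [x [/Hb H ax]]; exists x.
have h3 : forall a, AtomsOf atoms (fs (D2 (Supp c))) a -> AtomsOf atoms S2 a.
  by move=> a [x [/(D2P Hs) H ax]]; exists x.
have h4 : forall a, AtomsOf atoms (fs fset0) a -> AtomsOf atoms S2 a.
  by move=> a [x []]; rewrite /fs inE.
have Hf' : f \in hat (Supp b `|` fset0) by rewrite fsetU0.
have Hd' : derives (D1 (Supp c) `|` D2 (Supp c)) (Conc c) by rewrite -D12.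
case: (PRIME disj h1 h2 h3 h4 Hfc Hf' Hd').
- move=> [S1' [p1 [q1 [sub [Hp1 [Hc1 Hd1]]]]]].
  exists (S1', q1); split; last split.
  + split=> // x /(fsubsetP sub) /D1P []; by [].
  + apply: (fsubset_trans sub); rewrite {2}(D12 (Supp c)); exact: fsubsetUl.
  + by exists p1.
- by move=> [S2' [p2 [q2 [_ [Hp2 _]]]]]; move: Hp2; rewrite hat0 inE.
Qed.

Lemma PRS (G : {fset L}) : (forall x, x \in G -> S x) -> derives G phi ->
  exists G', G' `<=` G /\ isA S1 (G', phi).
Proof.
move=> HG Hd.
have Hi : indep atoms (unionP (fs (D1 G)) (singleP phi)) (fs (D2 G)).
  move=> a [x [Hx ax]] [y [Hy ay]]; have Hy2 := D2P HG Hy.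
  case: Hx => [/D1P [_ H]| Ex].
  + exact: (Hind (ex_intro _ x (conj (or_introl H) ax)) (ex_intro _ y (conj Hy2 ay))).
  + exact: (Hind (ex_intro _ x (conj (or_intror Ex) ax)) (ex_intro _ y (conj Hy2 ay))).
have Hd2 : derives (D1 G `|` D2 G) phi by rewrite -D12.
have [G' [sub Hd']] := PR Hi Hd2.
exists G'; split.
  apply: (fsubset_trans sub); rewrite {2}(D12 G); exact: fsubsetUl.
by split=> // x /(fsubsetP sub) /D1P [].
Qed.

Lemma L1 E c c' : cmp S E -> E c -> isA S c' -> Supp c' `<=` Supp c -> E c'.
Proof.
move=> [[_ [_ Hd]] Hcl] Ec Hc' sub; apply: Hcl => // b Hb Hbc.
exact: (Hd c Ec b Hb (att_sub sub Hbc)).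
Qed.

Definition E1of (E : arg L -> Prop) := fun a => E a /\ isA S1 a.

Lemma C1 E : cmp S E -> cmp S1 (E1of E).
Proof.
move=> HE; have [[Hs [Hcf Hd]] Hcl] := HE.
split; first split; [|split|].
- by move=> a [].
- by move=> a b [Ea _] [Eb _]; apply: Hcf.
- move=> a [Ea Ha] b Hb Hba.
  have [c [Ec Hcb]] := Hd a Ea b (isArg_mono Hb) Hba.
  have [c' [Hc' [sub Hc'b]]] := PS (Hs c Ec) (proj1 Hb) Hcb.
  exists c'; split=> //; split=> //.
  exact: (L1 HE Ec (isArg_mono Hc') sub).
- move=> a Ha Hda; split=> //; apply: Hcl; first exact: isArg_mono.
  move=> b Hb Hba.
  have [b' [Hb' [sub Hb'a]]] := PS Hb (proj1 Ha) Hba.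
  have [c [[Ec _] Hcb']] := Hda b' Hb' Hb'a.
  by exists c; split=> //; apply: (att_sub sub).
Qed.

Lemma C2 E1 : adm S1 E1 -> adm S E1.
Proof.
move=> [Hs [Hcf Hd]]; split; last split => //.
- by move=> a /Hs; apply: isArg_mono.
- move=> a Ha b Hb Hba.
  have [b' [Hb' [sub Hb'a]]] := PS Hb (proj1 (Hs a Ha)) Hba.
  have [c [Ec Hcb']] := Hd a Ha b' Hb' Hb'a.
  by exists c; split=> //; apply: (att_sub sub).
Qed.

Lemma C3 E E1 : cmp S E -> cmp S1 E1 -> subE (E1of E) E1 ->
  adm S (fun a => E1 a \/ E a).
Proof.
move=> HE [HE1 _] sub.
have [[Hs [Hcf Hd]] _] := HE.
have [Hs1 [Hcf1 Hd1]] := C2 HE1.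
split; last split.
- by move=> a [/Hs1|/Hs].
- move=> a b [E1a|Ea] [E1b|Eb] Hab.
  + exact: (Hcf1 a b).
  + have [c [Ec Hca]] := Hd b Eb a (Hs1 a E1a) Hab.
    have [c' [Hc' [sc Hc'a]]] := PS (Hs c Ec) (proj1 (HE1.1 a E1a)) Hca.
    have E1c' : E1 c'.
      by apply: sub; split=> //; apply: (L1 HE Ec (isArg_mono Hc') sc).
    exact: (Hcf1 c' a).
  + have [b' [Hb' [sb Hb'b]]] := PS (Hs a Ea) (proj1 (HE1.1 b E1b)) Hab.
    have E1b' : E1 b'.
      by apply: sub; split=> //; apply: (L1 HE Ea (isArg_mono Hb') sb).
    exact: (Hcf1 b' b).
  + exact: (Hcf a b).
- move=> a [E1a|Ea].
  + by apply: (defends_mono _ (Hd1 a E1a)) => z; left.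
  + by apply: (defends_mono _ (Hd a Ea)) => z; right.
Qed.

Lemma Xlemma E1 : cmp S1 E1 -> forall a, lfp derives contr hat S a ->
  forall a', isA S1 a' -> Supp a' `<=` Supp a -> E1 a'.
Proof.
move=> [_ Hcl1] a Ha.
pose X := fun a => isA S a /\ forall a', isA S1 a' -> Supp a' `<=` Supp a -> E1 a'.
suff : X a by case.
apply: (Ha X) => b Hb Hd; split=> // a' Ha' sub.
apply: Hcl1 => // d Hd' Hda'.
have [c [[Hc Xc] Hcd]] := Hd d (isArg_mono Hd') (att_sub sub Hda').
have [c' [Hc' [sc Hc'd]]] := PS Hc (proj1 Hd') Hcd.
by exists c'; split=> //; apply: Xc.
Qed.

Lemma main_sec (s : sem) : s = Grd \/ s = Prf ->
  (nmsim s derives contr hat S1 phi <-> nmsim s derives contr hat S phi).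
Proof.
move=> _; case: s.
- split=> H E HE.
  + have [a [Ha Hc]] := H _ (@lfp_grounded L derives contr hat S1).
    exists a; split=> //.
    have := (@lfp_grounded L derives contr hat S1).2 (E1of E) (C1 HE.1) a Ha.
    by case.
  + have [[G g] [Ha /= Hc]] := H _ (@lfp_grounded L derives contr hat S).
    have [HaS Hd] : isA S (G, g) by apply: (Ha (isA S)) => b Hb _.
    rewrite /= Hc in Hd.
    have [G' [sub HG']] := PRS HaS Hd.
    exists (G', phi); split=> //.
    exact: (Xlemma HE.1 Ha HG' sub).
- split=> H E HE.
  + have HP : preferred derives contr hat S1 (E1of E).
      split; first exact: (C1 HE.1).
      move=> E' HE' sub a Ea'.
      have [M [PM DM]] := exists_pref (C3 HE.1 HE' sub).
      have ME := HE.2 M PM.1 (fun x Ex => DM x (or_intror Ex)).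
      split; first by apply: ME; apply: DM; left.
      exact: (HE'.1.1 a Ea').
    have [a [[Ea _] Hc]] := H _ HP.
    by exists a.
  + have [M [PM EM]] := exists_pref (C2 HE.1.1).
    have [[G g] [Ma /= Hc]] := H M PM.
    have [HaS Hd] : isA S (G, g) by apply: PM.1.1.1.
    rewrite /= Hc in Hd.
    have [G' [sub HG']] := PRS HaS Hd.
    have MG' : M (G', phi) by apply: (L1 PM.1 Ma (isArg_mono HG') sub).
    exists (G', phi); split=> //.
    apply: (HE.2 (E1of M) (C1 PM.1)) => //.
    by move=> x Ex; split; [apply: EM | apply: HE.1.1.1].
Qed.

End Spec.

Theorem theorem1
  (L : choiceType) (Atom : Type) (atoms : L -> Atom -> Prop)
  (derives : {fset L} -> L -> Prop) (contr : L -> L -> Prop)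
  (hat : {fset L} -> {fset L})
  (hat0 : hat fset0 = fset0)
  (HPR : setting_pre_relevance atoms derives contr hat) :
  forall (s : sem), (s = Grd \/ s = Prf) ->
  forall (S1 S2 : L -> Prop) (phi : L),
    indep atoms (unionP S1 (singleP phi)) S2 ->
    (nmsim s derives contr hat S1 phi <->
     nmsim s derives contr hat (unionP S1 S2) phi).
Proof.
move=> s Hs S1 S2 phi Hind; case: HPR => PR PRIME HM.
exact: (@main_sec L Atom atoms derives contr hat hat0 PR PRIME HM S1 S2 phi Hind s Hs).
Qed.
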